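(* Let $\xi_m>0$, $0\le\mu\le\xi_m$ and $T>0$, and let $$f(u)=2T\ln\frac{\cosh(\sqrt{\xi_m^2+u^2}/2T)}{\cosh(\sqrt{\mu^2+u^2}/2T)}+\mu\int_0^{\mu}\tanh\Big(\frac{\sqrt{\xi^2+u^2}}{2T}\Big)\frac{d\xi}{\sqrt{\xi^2+u^2}},\quad u>0.$$ Then $u\mapsto u f(u)$ is strictly increasing on $(0,\infty)$. *)

(* Defs.v *)
From Stdlib Require Import Reals Lra ClassicalEpsilon.
Open Scope R_scope.

(* Riemann integral of g over [a,b], as a total function: the Stdlib
   RiemannInt (which does not depend on the integrability proof, cf.
   RiemannInt_P5) when g is Riemann integrable, and 0 otherwise. *)
Definition RInt (g : R -> R) (a b : R) : R :=
  match excluded_middle_informative (inhabited (Riemann_integrable g a b)) with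
  | left H => RiemannInt (epsilon H (fun _ => True))
  | right _ => 0
  end.

Definition f_fun (xim mu T u : R) : R :=
  2 * T * ln (cosh (sqrt (xim ^ 2 + u ^ 2) / (2 * T))
              / cosh (sqrt (mu ^ 2 + u ^ 2) / (2 * T)))
  + mu * RInt (fun xi => tanh (sqrt (xi ^ 2 + u ^ 2) / (2 * T))
                          / sqrt (xi ^ 2 + u ^ 2)) 0 mu.

(* Main.v *)
Require Import Defs.
From Stdlib Require Import Reals Lra ClassicalEpsilon.
From Coquelicot Require Import Coquelicot.
Open Scope R_scope.
Lemma dL (T w x : R) : 0 < T -> 0 < w ->
  is_derive (fun x => 2*T*ln(cosh(sqrt(x^2+w^2)/(2*T)))) x
     (x * (tanh (sqrt (x ^ 2 + w ^ 2) / (2 * T)) / sqrt (x ^ 2 + w ^ 2))).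
Proof.
intros HT Hw. unfold tanh, sinh, cosh.
assert (Hp : 0 < x * (x * 1) + w * (w * 1)) by nra.
auto_derive.
- split; [exact Hp|split;[exact Hp|split;[|exact I]]].
  pose proof (exp_pos (sqrt (x * (x * 1) + w * (w * 1)) * / (2 * T))).
  pose proof (exp_pos (- (sqrt (x * (x * 1) + w * (w * 1)) * / (2 * T)))). lra.
- replace (x ^ 2 + w ^ 2) with (x * (x * 1) + w * (w * 1)) by ring.
  pose proof (sqrt_lt_R0 _ Hp).
  set (s := sqrt (x * (x * 1) + w * (w * 1))) in *.
  unfold Rdiv.
  set (A := exp (s * / (2 * T))). set (B := exp (- (s * / (2 * T)))).
  assert (0 < A) by apply exp_pos. assert (0 < B) by apply exp_pos.
  field. lra.
Qed.

Lemma tanh_eq y : tanh y = 1 - 2 / (exp (2*y) + 1).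
Proof.
unfold tanh, sinh, cosh.
assert (E1 : exp (2*y) = exp y * exp y) by (rewrite <- exp_plus; f_equal; ring).
assert (E2 : exp (- y) = / exp y) by apply exp_Ropp.
rewrite E1, E2. pose proof (exp_pos y). field. nra.
Qed.

Lemma tanh_lt y z : y < z -> tanh y < tanh z.
Proof.
intro H. rewrite !tanh_eq.
assert (exp (2*y) < exp (2*z)) by (apply exp_increasing; lra).
pose proof (exp_pos (2*y)).
assert (2 / (exp (2*z) + 1) < 2 / (exp (2*y) + 1)).
{ unfold Rdiv. apply Rmult_lt_compat_l; [lra|]. apply Rinv_lt_contravar; nra. }
lra.
Qed.

Lemma tanh_pos y : 0 < y -> 0 < tanh y.
Proof.
intro H. replace 0 with (tanh 0). apply tanh_lt; auto.
unfold tanh, sinh. rewrite Ropp_0. lra.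
Qed.

Definition G (T w x : R) := tanh (sqrt (x ^ 2 + w ^ 2) / (2 * T)) / sqrt (x ^ 2 + w ^ 2).

Lemma key T u v x : 0 < T -> 0 < u -> u < v -> u * G T u x < v * G T v x.
Proof.
intros HT Hu Huv. unfold G.
assert (Ha : 0 < x^2 + u^2) by nra.
assert (Hb : 0 < x^2 + v^2) by nra.
pose proof (sqrt_lt_R0 _ Ha). pose proof (sqrt_lt_R0 _ Hb).
assert (Hab : sqrt (x^2+u^2) < sqrt (x^2+v^2)) by (apply sqrt_lt_1; nra).
pose proof (sqrt_sqrt _ (Rlt_le _ _ Ha)). pose proof (sqrt_sqrt _ (Rlt_le _ _ Hb)).
set (a := sqrt (x^2+u^2)) in *. set (b := sqrt (x^2+v^2)) in *.
assert (Ht : tanh (a/(2*T)) < tanh (b/(2*T))).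
{ apply tanh_lt. unfold Rdiv. apply Rmult_lt_compat_r; [|lra].
  apply Rinv_0_lt_compat; lra. }
assert (Ht0 : 0 < tanh (a/(2*T))).
{ apply tanh_pos. unfold Rdiv. apply Rmult_lt_0_compat; [lra|].
  apply Rinv_0_lt_compat; lra. }
assert (Hq : u * b <= v * a).
{ apply Rsqr_incr_0_var; [|nra]. unfold Rsqr.
  replace (u*b*(u*b)) with (u*u*(b*b)) by ring.
  replace (v*a*(v*a)) with (v*v*(a*a)) by ring.
  rewrite H1, H2.
  assert (0 <= (v*v - u*u) * x^2) by (apply Rmult_le_pos; nra).
  nra. }
assert (Hq2 : u / a <= v / b).
{ assert (E : v / b - u / a = (v*a - u*b) / (a*b)) by (field; lra).
  assert (0 <= (v*a - u*b) / (a*b)).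
  { apply Rmult_le_pos; [lra|]. apply Rlt_le, Rinv_0_lt_compat; nra. }
  lra. }
assert (0 < u / a) by (apply Rdiv_lt_0_compat; lra).
replace (u * (tanh (a / (2 * T)) / a)) with ((u/a) * tanh (a / (2 * T))) by (field; lra).
replace (v * (tanh (b / (2 * T)) / b)) with ((v/b) * tanh (b / (2 * T))) by (field; lra).
nra.
Qed.

Lemma G_cont T w x : 0 < T -> 0 < w -> continuous (G T w) x.
Proof.
intros HT Hw. apply (@ex_derive_continuous R_AbsRing R_NormedModule (G T w) x). unfold G, tanh, sinh, cosh.
assert (Hp : 0 < x * (x * 1) + w * (w * 1)) by nra.
auto_derive.
pose proof (sqrt_lt_R0 _ Hp).
set (s := sqrt (x * (x * 1) + w * (w * 1))) in *.
pose proof (exp_pos (s * / (2 * T))).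
pose proof (exp_pos (- (s * / (2 * T)))).
repeat split; try lra; try exact Hp.
Qed.

Lemma RInt_bridge g a b : ex_RInt g a b -> Defs.RInt g a b = RInt g a b.
Proof.
intro H. unfold Defs.RInt.
destruct excluded_middle_informative as [Hi|Hn].
- rewrite (RInt_Reals g a b (epsilon Hi (fun _ => True))). reflexivity.
- exfalso. apply Hn. constructor. apply ex_RInt_Reals_0. exact H.
Qed.

Definition L (T w x : R) := 2*T*ln(cosh(sqrt(x^2+w^2)/(2*T))).

Lemma cosh_pos y : 0 < cosh y.
Proof. unfold cosh. pose proof (exp_pos y). pose proof (exp_pos (-y)). lra. Qed.

Lemma f_eq xim mu T w : f_fun xim mu T w = L T w xim - L T w mu + mu * Defs.RInt (G T w) 0 mu.
Proof.
unfold f_fun, L. rewrite ln_div by apply cosh_pos. fold (G T w). ring.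
Qed.

Lemma G_ex T w a b : 0 < T -> 0 < w -> ex_RInt (G T w) a b.
Proof. intros. apply (@ex_RInt_continuous R_CompleteNormedModule). intros. apply G_cont; auto. Qed.

Lemma scal_cont T w c x : 0 < T -> 0 < w -> continuous (fun x => c * G T w x) x.
Proof.
intros. apply (@continuous_mult R_UniformSpace R_AbsRing (fun _ => c) (G T w)).
apply continuous_const. apply G_cont; auto.
Qed.

Theorem mainTheorem5 (xim mu T : R) :
  0 < xim -> 0 <= mu -> mu <= xim -> 0 < T ->
  forall u v : R, 0 < u -> u < v ->
    u * f_fun xim mu T u < v * f_fun xim mu T v.
Proof.
intros Hxi Hmu Hmx HT u v Hu Huv.
assert (Hv : 0 < v) by lra.
rewrite !f_eq, !RInt_bridge by (apply G_ex; lra).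
set (phi := fun x => v * L T v x - u * L T u x).
assert (Hd : forall c, derivable_pt_lim phi c (c*(v*G T v c - u*G T u c))).
{ intro c. replace (c*(v*G T v c - u*G T u c)) with (v*(c*G T v c) - u*(c*G T u c)) by ring.
  apply (derivable_pt_lim_minus (mult_real_fct v (L T v)) (mult_real_fct u (L T u)));
  apply derivable_pt_lim_scal; apply is_derive_Reals; unfold L, G; apply dL; lra. }
assert (D1 : phi mu <= phi xim /\ (mu < xim -> phi mu < phi xim)).
{ destruct (Rle_lt_or_eq_dec mu xim Hmx) as [Hlt|Heq].
  - destruct (MVT_cor2 phi (fun c => c*(v*G T v c - u*G T u c)) mu xim Hlt)
      as [c [Hc Hcr]].
    { intros; apply Hd. }
    assert (0 < c*(v*G T v c - u*G T u c)).
    { apply Rmult_lt_0_compat; [lra|]. pose proof (key T u v c HT Hu Huv). lra. }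
    assert (0 < c*(v*G T v c - u*G T u c) * (xim - mu)) by (apply Rmult_lt_0_compat; lra).
    split; intros; lra.
  - subst. split; intros; lra. }
assert (EU : RInt (fun x => u*G T u x) 0 mu = u * RInt (G T u) 0 mu).
{ exact (RInt_scal (G T u) 0 mu u (G_ex T u 0 mu HT Hu)). }
assert (EV : RInt (fun x => v*G T v x) 0 mu = v * RInt (G T v) 0 mu).
{ exact (RInt_scal (G T v) 0 mu v (G_ex T v 0 mu HT Hv)). }
assert (D2 : mu * (u * RInt (G T u) 0 mu) <= mu * (v * RInt (G T v) 0 mu)
             /\ (0 < mu -> mu * (u * RInt (G T u) 0 mu) < mu * (v * RInt (G T v) 0 mu))).
{ destruct (Rle_lt_or_eq_dec 0 mu Hmu) as [Hlt|Heq].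
  - assert (u * RInt (G T u) 0 mu < v * RInt (G T v) 0 mu).
    { rewrite <- EU, <- EV. apply RInt_lt; auto.
      - intros; apply scal_cont; lra.
      - intros; apply scal_cont; lra.
      - intros; apply key; lra. }
    assert (mu * (u * RInt (G T u) 0 mu) < mu * (v * RInt (G T v) 0 mu))
      by (apply Rmult_lt_compat_l; lra).
    split; intros; lra.
  - subst. split; intros; lra. }
unfold phi in D1.
replace (u * (L T u xim - L T u mu + mu * RInt (G T u) 0 mu)) with
  (u * L T u xim - u * L T u mu + mu * (u * RInt (G T u) 0 mu)) by ring.
replace (v * (L T v xim - L T v mu + mu * RInt (G T v) 0 mu)) with
  (v * L T v xim - v * L T v mu + mu * (v * RInt (G T v) 0 mu)) by ring.
destruct D1 as [D1a D1b]. destruct D2 as [D2a D2b].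
destruct (Rle_lt_or_eq_dec mu xim Hmx) as [Hlt|Heq].
- specialize (D1b Hlt). lra.
- assert (0 < mu) by lra. specialize (D2b H). lra.
Qed.
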